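(* Let $N\ge2$ and let $M$ be the Riemannian model with pole $o$ and metric $dr^2+\psi^2(r)d\omega^2$, with $\psi$ smooth, positive on $(0,\infty)$, $\psi(0)=\psi''(0)=0$, $\psi'(0)=1$. Let $\alpha\in\mathbb{R}$ and $\Phi(r)=\left(\frac{\psi(r)}{r}\right)^\alpha$. Then on $M\setminus\{o\}$, $$-\Delta_g\Phi-\alpha\left[K^{rad}_{\pi,r}+(\alpha-2+N)H^{tan}_{\pi,r}\right]\Phi=-\alpha(\alpha-2+N)\frac{\Phi}{\psi^2}-\frac{\alpha(\alpha+1)}{r^2}\Phi+\frac{2\alpha^2+\alpha(N-1)}{r}\frac{\psi'}{\psi}\Phi.$$ Hence $\Phi(r)=\left(\frac{r}{\psi(r)}\right)^{\frac{N-1}{2}}$ satisfies $$-\Delta_g\Phi+\frac{(N-1)}{4}\left[2K^{rad}_{\pi,r}+(N-3)H^{tan}_{\pi,r}\right]\Phi=\frac{(N-1)(N-3)}{4}\Phi\left(\frac{1}{\psi^2}-\frac{1}{r^2}\right).$$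
   Context: $r$ is the distance from the pole, $d\omega^2$ the round metric of $\mathbb{S}^{N-1}$; for radial functions $\Delta_g\Phi=\Phi''+(N-1)\frac{\psi'}{\psi}\Phi'$. $K^{rad}_{\pi,r}=-\psi''/\psi$ and $H^{tan}_{\pi,r}=-(\psi'^2-1)/\psi^2$. *)

(* Defs.v *)
From Stdlib Require Import Reals.
From Coquelicot Require Import Coquelicot.
Open Scope R_scope.

Definition smooth (f : R -> R) : Prop := forall (n : nat) (x : R), ex_derive_n f n x.

(* Laplace-Beltrami operator of the model metric dr^2 + psi(r)^2 dω^2 (dimension N)
   applied to a radial function Phi, evaluated at distance r from the pole:
   Δ_g Φ = Φ'' + (N-1) ψ'/ψ Φ'. *)
Definition lap_rad (N : nat) (psi Phi : R -> R) (r : R) : R :=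
  Derive_n Phi 2 r + (INR N - 1) * (Derive psi r / psi r) * Derive Phi r.

Definition K_rad (psi : R -> R) (r : R) : R := - (Derive_n psi 2 r / psi r).

Definition H_tan (psi : R -> R) (r : R) : R :=
  - ((Derive psi r ^ 2 - 1) / psi r ^ 2).

(* Main.v *)
Require Import Defs.
From Stdlib Require Import Reals Lra.
From Coquelicot Require Import Coquelicot.
Open Scope R_scope.

Lemma loc_pos (r : R) : 0 < r -> locally r (fun t => 0 < t).
Proof.
intros Hr. exists (mkposreal r Hr). intros t Ht.
unfold ball in Ht; simpl in Ht; unfold AbsRing_ball, abs, minus, plus, opp in Ht; simpl in Ht.
apply Rabs_lt_between' in Ht. lra.
Qed.

Lemma key1 (psi : R -> R) (a r : R) :
  0 < r -> (forall s, 0 < s -> 0 < psi s) ->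
  (forall x, ex_derive psi x) -> (forall x, ex_derive (Derive psi) x) ->
  let Phi := fun s => Rpower (psi s / s) a in
  Derive Phi r = a * (Derive psi r / psi r - 1 / r) * Phi r /\
  Derive_n Phi 2 r =
   a * (Derive (Derive psi) r / psi r - (Derive psi r / psi r) ^ 2 + 1 / r ^ 2) * Phi r
   + a ^ 2 * (Derive psi r / psi r - 1 / r) ^ 2 * Phi r.
Proof.
intros Hr Hp D1 D2 Phi.
assert (HD : forall s, 0 < s -> is_derive Phi s (a * (Derive psi s / psi s - 1 / s) * Phi s)).
{ intros s Hs. pose proof (Hp s Hs). unfold Phi, Rpower. auto_derive.
  - repeat split; auto. lra. apply Rmult_lt_0_compat; auto. apply Rinv_0_lt_compat; auto.
  - unfold Rdiv. set (E := exp _). change (Derive (fun x => psi x) s) with (Derive psi s). field. lra. }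
split. { apply is_derive_unique, HD; auto. }
simpl. apply is_derive_unique.
apply is_derive_ext_loc with (fun s => a * (Derive psi s / psi s - 1 / s) * Phi s).
{ generalize (loc_pos r Hr). apply filter_imp. intros t Ht. symmetry. apply is_derive_unique, HD; auto. }
pose proof (Hp r Hr).
evar (l : R). assert (Hl : is_derive (fun s => a * (Derive psi s / psi s - 1 / s) * Phi s) r l).
{ unfold Phi, Rpower. auto_derive.
  - repeat split; auto; try lra. apply Rmult_lt_0_compat; auto. apply Rinv_0_lt_compat; auto.
  - unfold l. reflexivity. }
match goal with |- is_derive _ _ ?t => replace t with l end; [exact Hl|].
unfold l, Rdiv. set (E := exp _). change (Derive (fun x => psi x) r) with (Derive psi r).
change (Derive (fun x => Derive psi x) r) with (Derive (Derive psi) r).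
unfold Phi, Rpower, Rdiv. fold E. field. split; lra.
Qed.

Lemma key2 (psi : R -> R) (a r : R) :
  0 < r -> (forall s, 0 < s -> 0 < psi s) ->
  (forall x, ex_derive psi x) -> (forall x, ex_derive (Derive psi) x) ->
  let Phi := fun s => Rpower (s / psi s) a in
  Derive Phi r = a * (1 / r - Derive psi r / psi r) * Phi r /\
  Derive_n Phi 2 r =
   a * (- Derive (Derive psi) r / psi r + (Derive psi r / psi r) ^ 2 - 1 / r ^ 2) * Phi r
   + a ^ 2 * (1 / r - Derive psi r / psi r) ^ 2 * Phi r.
Proof.
intros Hr Hp D1 D2 Phi.
assert (HD : forall s, 0 < s -> is_derive Phi s (a * (1 / s - Derive psi s / psi s) * Phi s)).
{ intros s Hs. pose proof (Hp s Hs). unfold Phi, Rpower. auto_derive.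
  - repeat split; auto. lra. apply Rmult_lt_0_compat; auto. apply Rinv_0_lt_compat; auto.
  - unfold Rdiv. set (E := exp _). change (Derive (fun x => psi x) s) with (Derive psi s). field. lra. }
split. { apply is_derive_unique, HD; auto. }
simpl. apply is_derive_unique.
apply is_derive_ext_loc with (fun s => a * (1 / s - Derive psi s / psi s) * Phi s).
{ generalize (loc_pos r Hr). apply filter_imp. intros t Ht. symmetry. apply is_derive_unique, HD; auto. }
pose proof (Hp r Hr).
evar (l : R). assert (Hl : is_derive (fun s => a * (1 / s - Derive psi s / psi s) * Phi s) r l).
{ unfold Phi, Rpower. auto_derive.
  - repeat split; auto; try lra. apply Rmult_lt_0_compat; auto. apply Rinv_0_lt_compat; auto.
  - unfold l. reflexivity. }
match goal with |- is_derive _ _ ?t => replace t with l end; [exact Hl|].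
unfold l, Rdiv. set (E := exp _). change (Derive (fun x => psi x) r) with (Derive psi r).
change (Derive (fun x => Derive psi x) r) with (Derive (Derive psi) r).
unfold Phi, Rpower, Rdiv. fold E. field. split; lra.
Qed.

Theorem lemma4p2 (N : nat) (psi : R -> R) :
  (2 <= N)%nat ->
  smooth psi ->
  (forall r, 0 < r -> 0 < psi r) ->
  psi 0 = 0 -> Derive psi 0 = 1 -> Derive_n psi 2 0 = 0 ->
  (forall (alpha r : R), 0 < r ->
     let Phi := fun s : R => Rpower (psi s / s) alpha in
     - lap_rad N psi Phi r
       - alpha * (K_rad psi r + (alpha - 2 + INR N) * H_tan psi r) * Phi r
     = - alpha * (alpha - 2 + INR N) * (Phi r / psi r ^ 2)
       - alpha * (alpha + 1) / r ^ 2 * Phi r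
       + (2 * alpha ^ 2 + alpha * (INR N - 1)) / r * (Derive psi r / psi r) * Phi r)
  /\
  (forall r : R, 0 < r ->
     let Phi := fun s : R => Rpower (s / psi s) ((INR N - 1) / 2) in
     - lap_rad N psi Phi r
       + (INR N - 1) / 4 * (2 * K_rad psi r + (INR N - 3) * H_tan psi r) * Phi r
     = (INR N - 1) * (INR N - 3) / 4 * Phi r * (1 / psi r ^ 2 - 1 / r ^ 2)).
Proof.
intros HN Hs Hp _ _ _.
assert (D1 : forall x, ex_derive psi x) by (intro x; exact (Hs 1%nat x)).
assert (D2 : forall x, ex_derive (Derive psi) x) by (intro x; exact (Hs 2%nat x)).
split.
- intros a r Hr Phi.
  destruct (key1 psi a r Hr Hp D1 D2) as [E1 E2].
  pose proof (Hp r Hr).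
  unfold lap_rad, K_rad, H_tan. fold Phi in E1, E2. rewrite E1, E2.
  change (Derive_n psi 2 r) with (Derive (Derive psi) r).
  unfold Phi; set (E := Rpower _ _). field. split; lra.
- intros r Hr Phi.
  destruct (key2 psi ((INR N - 1) / 2) r Hr Hp D1 D2) as [E1 E2].
  pose proof (Hp r Hr).
  unfold lap_rad, K_rad, H_tan. fold Phi in E1, E2. rewrite E1, E2.
  change (Derive_n psi 2 r) with (Derive (Derive psi) r).
  unfold Phi; set (E := Rpower _ _). field. split; lra.
Qed.
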